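(* Let $g\in W(\mathsf D_n)$, written as a product $g=\beta_1\cdots\beta_R$ of disjoint signed permutation cycles, and let $\Lambda$ be the number of $i$ with $\sigma(\beta_i)=-1$. Let $\langle g\rangle$ act on $\mathrm{Pic}(\bar X)=\bigoplus_{i=-1}^n\mathbb Z l_i$ via $\Phi$. Then $$\mathrm H^1(\langle g\rangle,\mathrm{Pic}(\bar X))=\begin{cases}0,&\Lambda=0\text{ or }\Lambda=2,\\ (\mathbb Z/2)^{\Lambda-2},&\text{otherwise.}\end{cases}$$
   Context: $W(\mathsf B_n)$ is the group of signed permutations of the symbols $j^\pm$ ($j=1,\dots,n$), generated by $\mathfrak S_n$ and involutions $c_j$ exchanging $j^+,j^-$; each element is $c_{j_1}\cdots c_{j_t}\tau$ with distinct $j_i$, $\tau\in\mathfrak S_n$; $\sigma(c_{j_1}\cdots c_{j_t}\tau)=(-1)^t$, $W(\mathsf D_n)=\ker\sigma$. Decomposing $\tau$ into disjoint cycles $\gamma$ (including fixed points), the signed permutation cycles of $g$ are $\beta_\gamma=(\prod_{j_i\in\mathrm{supp}\,\gamma}c_{j_i})\gamma$, and $\sigma(\beta_\gamma)=(-1)^{\#\{j_i\in\mathrm{supp}\,\gamma\}}$. $\mathrm{Pic}(\bar X)$ is the geometric Picard lattice of a standard conic bundle over $\mathbb P^1$ with $n$ degenerate fibers, with basis $l_{-1},l_0,l_1,\dots,l_n$ ($l_0$ the fiber class, $l_j$ a component of the $j$-th degenerate fiber). For $g=c_{j_1}\cdots c_{j_t}\tau$ with $t$ even, let $s(i)=-1$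 if $i\in\{j_1,\dots,j_t\}$, else $1$; then $\Phi(g)l_0=l_0$, $\Phi(g)l_{-1}=l_{-1}+\frac t2l_0-\sum_{s(i)=-1}l_i$, and for $v\ge1$, $u=\tau^{-1}(v)$: $\Phi(g)l_v=l_u$ if $s(u)=1$, $\Phi(g)l_v=l_0-l_u$ if $s(u)=-1$. *)

(* Defs.v *)
From HB Require Import structures.
From mathcomp Require Import all_boot all_order all_algebra all_fingroup.
Set Implicit Arguments. Unset Strict Implicit. Unset Printing Implicit Defensive.
Import GRing.Theory.
Local Open Scope ring_scope.

(* An element g = c_{j_1}...c_{j_t} tau of W(B_n) is encoded by the set
   J = {j_1,...,j_t} : {set 'I_n} of sign-flipped symbols and tau : 'S_n
   (symbols 1..n are the ordinals 0..n-1).  g is in W(D_n) iff #|J| is even.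

   Pic(X) = Z^{n+2} with basis indexed by 'I_(n.+2) = 'I_(2+n):
     index 0 <-> l_{-1},  index 1 <-> l_0,  index 2+j <-> l_{j+1} (j : 'I_n).
   Phi_mat J tau is the matrix of Phi(g) acting on column vectors:
   its column v is Phi(g) applied to the basis vector v. *)
Definition Phi_mat (n : nat) (J : {set 'I_n}) (tau : 'S_n) : 'M[int]_(n.+2) :=
  \matrix_(i < n.+2, v < n.+2)
   match @split 2 n v with
   | inl a =>
       if a == (ord0 : 'I_2) then
         (* Phi(g) l_{-1} = l_{-1} + t/2 l_0 - sum_{j in J} l_j *)
         match @split 2 n i with
         | inl b => if b == (ord0 : 'I_2) then 1 else ((#|J| %/ 2)%N)%:Z
         | inr j => if j \in J then -1 else 0
         end
       else
         (* Phi(g) l_0 = l_0 *)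
         match @split 2 n i with
         | inl b => if b == (ord0 : 'I_2) then 0 else 1
         | inr _ => 0
         end
   | inr w =>
       (* Phi(g) l_w = l_u if u not in J, l_0 - l_u if u in J, u = tau^-1 w *)
       let u := ((tau^-1)%g w) in
       match @split 2 n i with
       | inl b => if b == (ord0 : 'I_2) then 0 else (if u \in J then 1 else 0)
       | inr j => if j == u then (if u \in J then -1 else 1) else 0
       end
   end.

(* Crossed homomorphisms (1-cocycles) of the cyclic group <P> = {P^a | a : nat}
   (a finite group, P having finite order) acting on M = Z^{n+2} through matrices. *)
Definition cocycle (n : nat) (P : 'M[int]_(n.+2))
  (f : 'M[int]_(n.+2) -> 'cV[int]_(n.+2)) : Prop :=
  forall a b : nat, f (P ^+ a *m P ^+ b) = f (P ^+ a) + P ^+ a *m f (P ^+ b).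

Definition coboundary (n : nat) (P : 'M[int]_(n.+2))
  (f : 'M[int]_(n.+2) -> 'cV[int]_(n.+2)) : Prop :=
  exists m : 'cV[int]_(n.+2), forall a : nat, f (P ^+ a) = P ^+ a *m m - m.

(* H^1(<P>, Z^{n+2}) = cocycles / coboundaries is isomorphic to (Z/2)^k:
   there is a group morphism from the cocycles onto (F_2)^k whose kernel is
   exactly the coboundaries. *)
Definition H1_iso_F2pow (n : nat) (P : 'M[int]_(n.+2)) (k : nat) : Prop :=
  exists phi : ('M[int]_(n.+2) -> 'cV[int]_(n.+2)) -> 'rV['F_2]_k,
  [/\ forall f1 f2, cocycle P f1 -> cocycle P f2 ->
        phi (fun A => f1 A + f2 A) = phi f1 + phi f2,
      forall v, exists2 f, cocycle P f & phi f = v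
    & forall f, cocycle P f -> (phi f = 0 <-> coboundary P f)].

(* Lambda = number of signed cycles beta_gamma (gamma a cycle of tau, fixed
   points included) with sigma(beta_gamma) = -1, i.e. #|J :&: supp gamma| odd. *)
Definition Lambda (n : nat) (J : {set 'I_n}) (tau : 'S_n) : nat :=
  #|[set c in porbits tau | odd #|J :&: c|]|.

(* Main.v *)
Require Import Defs.
From HB Require Import structures.
From mathcomp Require Import all_boot all_order all_algebra all_fingroup.
From mathcomp Require Import zify ring lra.

Module T1.
Set Implicit Arguments. Unset Strict Implicit. Unset Printing Implicit Defensive.
Import GRing.Theory Num.Theory.
Local Open Scope ring_scope.

Lemma F2_2 : (2%:R : 'F_2) = 0. Proof. by apply/eqP. Qed.
Lemma F2_add_self (a : 'F_2) : a + a = 0.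
Proof. by rewrite -mulr2n -mulr_natr F2_2 mulr0. Qed.
Lemma F2_opp (a : 'F_2) : - a = a.
Proof. by apply/eqP; rewrite eq_sym -subr_eq0 opprK F2_add_self. Qed.
Lemma F2_intr_dvd (z : int) : ((z%:~R : 'F_2) == 0) = (2 %| z)%Z.
Proof.
rewrite {1}(divz_eq z 2) intrD intrM.
have -> : ((2:int)%:~R : 'F_2) = 0 by apply/eqP.
rewrite mulr0 add0r.
have h0 := modz_ge0 z (isT : (2:int) != 0).
have h1 := ltz_mod z (isT : (2:int) != 0).
have : (z %% 2)%Z = 0 \/ (z %% 2)%Z = 1 by lia.
case=> h; rewrite h.
  by rewrite eqxx; symmetry; apply/dvdz_mod0P.
rewrite (_ : (1%:~R : 'F_2) == 0 = false) //; symmetry; apply/negP => /dvdz_mod0P.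
by rewrite h.
Qed.
Lemma F2_cases (a : 'F_2) : a = 0 \/ a = 1.
Proof. by case: a => [[|[|m]] //= h]; [left|right]; apply/val_inj. Qed.

End T1.

Module T2b.
Import T1.
Set Implicit Arguments. Unset Strict Implicit. Unset Printing Implicit Defensive.
Import GRing.Theory Num.Theory.
Local Open Scope ring_scope.

Lemma sum_traject (T : finType) (V : zmodType) (f : T -> T) (F : T -> V) k x :
  \sum_(v <- traject f x k) F v = \sum_(i < k) F (iter i f x).
Proof.
elim: k x => [|k IH] x; first by rewrite big_nil big_ord0.
by rewrite /= big_cons big_ord_recl IH; congr (_ + _); apply: eq_bigr => i _; rewrite iterSr.
Qed.

Section Main.
Variables (n : nat) (J : {set 'I_n}) (tau : 'S_n).

Definition tf : 'I_n -> 'I_n := fun u => tau u.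
Lemma tf_inj : injective tf. Proof. exact: perm_inj. Qed.

Definition eps (u : 'I_n) : int := if u \in J then -1 else 1.
Definition cnt (a : nat) (u : 'I_n) : nat := (\sum_(i < a) (iter i tf u \in J))%N.
Definition sgnb (b : bool) : int := if b then -1 else 1.
Definition E a u := sgnb (odd (cnt a u)).
Definition D a u : int := (odd (cnt a u) : nat)%:Z.
Definition S (z : 'I_n -> int) a u := \sum_(i < a) E i u * z (iter i tf u).

Lemma cnt0 u : cnt 0 u = 0%N. Proof. by rewrite /cnt big_ord0. Qed.
Lemma cntS a u : cnt a.+1 u = ((u \in J) + cnt a (tf u))%N.
Proof.
rewrite /cnt big_ord_recl /=; congr (_ + _)%N.
by apply: eq_bigr => i _; rewrite -iterS -iterSr.
Qed.
Lemma E0 u : E 0 u = 1. Proof. by rewrite /E cnt0. Qed.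
Lemma ES a u : E a.+1 u = eps u * E a (tf u).
Proof.
rewrite /E /eps cntS oddD; case: (u \in J); case: (odd (cnt a (tf u))); rewrite /sgnb /=; ring.
Qed.
Lemma DS a u : D a.+1 u = (u \in J : nat)%:Z + eps u * D a (tf u).
Proof.
rewrite /D /eps cntS oddD; case: (u \in J); case: (odd (cnt a (tf u))) => //=.
Qed.
Lemma SS z a u : S z a.+1 u = z u + eps u * S z a (tf u).
Proof.
rewrite /S big_ord_recl /= E0 mul1r; congr (_ + _).
rewrite mulr_sumr; apply: eq_bigr => i _; rewrite /= ES -iterS -iterSr; ring.
Qed.
Lemma cntD a b u : cnt (a + b) u = (cnt a u + cnt b (iter a tf u))%N.
Proof.
elim: a u => [|a IH] u; first by rewrite cnt0.
by rewrite addSn !cntS IH addnA iterSr.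
Qed.
Lemma ED a b u : E (a + b) u = E a u * E b (iter a tf u).
Proof.
rewrite /E cntD oddD; case: (odd (cnt a u)); case: (odd (cnt b (iter a tf u))); rewrite /sgnb /=; ring.
Qed.
Lemma SD z a b u : S z (a + b) u = S z a u + E a u * S z b (iter a tf u).
Proof.
elim: a u => [|a IH] u; first by rewrite /S big_ord0 E0 add0r mul1r.
rewrite addSn !SS IH ES iterSr; ring.
Qed.
Lemma SDz z1 z2 a u : S (fun v => z1 v + z2 v) a u = S z1 a u + S z2 a u.
Proof. by rewrite /S -big_split; apply: eq_bigr => i _; rewrite mulrDr. Qed.
Lemma SMz c z a u : S (fun v => c * z v) a u = c * S z a u.
Proof. by rewrite /S mulr_sumr; apply: eq_bigr => i _; ring. Qed.
Lemma Sind a u : S (fun v => (v \in J : nat)%:Z) a u = D a u.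
Proof.
elim: a u => [|a IH] u; first by rewrite /S big_ord0 /D cnt0.
by rewrite SS DS IH.
Qed.
Lemma E_cases a u : E a u = 1 /\ D a u = 0 \/ E a u = -1 /\ D a u = 1.
Proof. by rewrite /E /D; case: (odd _); [right|left]. Qed.

Lemma porbit_orbit u : porbit tau u =i fingraph.orbit tf u.
Proof.
move=> y; rewrite -fconnect_orbit; apply/porbitP/idP.
  by case=> i ->; rewrite permX; apply: fconnect_iter.
by move/iter_findex => <-; exists (fingraph.findex tf u y); rewrite permX.
Qed.

Lemma orbit_sum (V : zmodType) (F : 'I_n -> V) u :
  \sum_(v in porbit tau u) F v = \sum_(i < fingraph.order tf u) F (iter i tf u).
Proof.
rewrite -sum_traject -/(fingraph.orbit tf u) big_uniq ?orbit_uniq //.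
by apply: eq_bigl => v; rewrite porbit_orbit.
Qed.

Lemma sum_trajectn (f : 'I_n -> 'I_n) (F : 'I_n -> nat) k x :
  (\sum_(v <- traject f x k) F v = \sum_(i < k) F (iter i f x))%N.
Proof.
elim: k x => [|k IH] x; first by rewrite big_nil big_ord0.
by rewrite /= big_cons big_ord_recl IH; congr (_ + _)%N; apply: eq_bigr => i _; rewrite iterSr.
Qed.
Lemma orbit_sumn (F : 'I_n -> nat) u :
  (\sum_(v in porbit tau u) F v = \sum_(i < fingraph.order tf u) F (iter i tf u))%N.
Proof.
rewrite -sum_trajectn -/(fingraph.orbit tf u) big_uniq ?orbit_uniq //.
by apply: eq_bigl => v; rewrite porbit_orbit.
Qed.
Lemma card_JC u : #|J :&: porbit tau u| = cnt (fingraph.order tf u) u.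
Proof.
rewrite /cnt -(@orbit_sumn (fun v => (v \in J : nat))).
rewrite -sum1_card [RHS](big_setID J) /= [X in (_ + X)%N]big1 ?addn0 => [|v]; last by rewrite !inE => /andP[/negPf ->].
apply: eq_big => v; first by rewrite !inE andbC.
by rewrite !inE => /andP[->].
Qed.

Lemma froot_tf u : froot tf (tf u) = froot tf u.
Proof.
have sym := fconnect_sym tf_inj. apply/(fingraph.rootP sym). rewrite sym; exact: fconnect1.
Qed.

Lemma order_tf u : fingraph.order tf (tf u) = fingraph.order tf u.
Proof. exact: order_id_cycle (cycle_orbit tf_inj u). Qed.

Lemma solve_cycle (x' : 'I_n -> int) :
  (forall u, E (fingraph.order tf u) u = 1 -> S x' (fingraph.order tf u) u = 0) ->
  (forall u, E (fingraph.order tf u) u = -1 -> (2 %| S x' (fingraph.order tf u) u)%Z) ->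
  exists y : 'I_n -> int, forall u, y u = eps u * y (tf u) - x' u.
Proof.
move=> He Ho.
pose Y (w : 'I_n) := if E (fingraph.order tf w) w == 1 then 0
                     else - ((S x' (fingraph.order tf w) w) %/ 2)%Z.
pose a u := fingraph.findex tf u (froot tf u).
exists (fun u => - S x' (a u) u + E (a u) u * Y (froot tf u)) => u.
rewrite /a froot_tf.
have cu : fconnect tf u (froot tf u) := connect_root _ u.
case: (eqVneq (froot tf u) u) => [ru | neq].
  rewrite ru findex0 /S big_ord0 E0 oppr0 add0r mul1r.
  set k := fingraph.order tf u.
  have k0 : (0 < k)%N := fingraph.order_gt0 _ _.
  have hk : fingraph.findex tf (tf u) u = k.-1.
    have e : iter k.-1 tf (tf u) = u.
      by rewrite -iterSr orderSpred iter_order //; exact: tf_inj.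
    rewrite -{2}e findex_iter // order_tf -/k; lia.
  rewrite hk -/(S x' k.-1 (tf u)).
  have hS := SS x' k.-1 u; have hE := ES k.-1 u; rewrite prednK // in hS hE.
  have -> : eps u * (- S x' k.-1 (tf u) + E k.-1 (tf u) * Y u) - x' u =
            - (x' u + eps u * S x' k.-1 (tf u)) + (eps u * E k.-1 (tf u)) * Y u by ring.
  rewrite -hS -hE /Y -/k.
  case: (E_cases k u) => [[h _]|[h _]].
    by rewrite h eqxx (He u h) oppr0 add0r mul1r.
  rewrite h (_ : (-1 == 1) = false) //.
  have := divzK (Ho u h); rewrite -/k; move: (S x' k u) => s; lia.
rewrite (fconnect_findex cu neq) SS ES; ring.
Qed.

Definition im1 : 'I_(n.+2) := ord0.
Definition i0 : 'I_(n.+2) := Ordinal (isT : (1 < n.+2)%N).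
Definition iu (u : 'I_n) : 'I_(n.+2) := rshift 2 u.

Lemma split_im1 : @split 2 n im1 = inl ord0.
Proof. by rewrite (_ : im1 = lshift n (ord0 : 'I_2)) ?(unsplitK (inl _)) //; apply/val_inj. Qed.
Lemma split_i0 : @split 2 n i0 = inl (Ordinal (isT : (1 < 2)%N)).
Proof. by rewrite (_ : i0 = lshift n (Ordinal (isT : (1 < 2)%N))) ?(unsplitK (inl _)) //; apply/val_inj. Qed.
Lemma split_iu u : @split 2 n (iu u) = inr u.
Proof. exact: (unsplitK (inr _)). Qed.

Lemma iu_inj : injective iu.
Proof. by move=> u v /(congr1 val) /= /eqP; rewrite eqn_add2l => /eqP /val_inj. Qed.

Lemma idx_cases (i : 'I_(n.+2)) : [\/ i = im1, i = i0 | exists u, i = iu u].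
Proof.
case: (splitP (i : 'I_(2 + n))) => [a|u] e.
  case: a e => [[|[|m]] //= ha] e.
    by apply: Or31; apply/val_inj.
  by apply: Or32; apply/val_inj.
by apply: Or33; exists u; apply/val_inj.
Qed.

Lemma sum_idx (V : zmodType) (F : 'I_(n.+2) -> V) :
  \sum_(v < n.+2) F v = F im1 + F i0 + \sum_(u < n) F (iu u).
Proof.
rewrite big_ord_recl big_ord_recl addrA; congr (_ + _ + _).
  by congr F; apply/val_inj.
by apply: eq_bigr => u _; congr F; apply/val_inj.
Qed.



End Main.

End T2b.

Module T4.
Import T1 T2b.
Set Implicit Arguments. Unset Strict Implicit. Unset Printing Implicit Defensive.
Import GRing.Theory Num.Theory.
Local Open Scope ring_scope.
Section Main.
Variables (n : nat) (J : {set 'I_n}) (tau : 'S_n).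
Local Notation P := (Phi_mat J tau).
Local Notation im1 := (@im1 n).
Local Notation i0 := (@i0 n).
Local Notation iu := (@iu n).
Lemma i1ne : (Ordinal (isT : (1<2)%N) == (ord0 : 'I_2)) = false. Proof. by []. Qed.

Lemma Pmul_m1 p (y : 'M[int]_(n.+2, p)) j : (P *m y) im1 j = y im1 j.
Proof.
rewrite mxE sum_idx /Phi_mat !mxE split_im1 split_i0 i1ne eqxx mul1r mul0r addr0.
by rewrite big1 ?addr0 // => u _; rewrite mxE split_iu split_im1 eqxx mul0r.
Qed.

Lemma sum_single (F : 'I_n -> int) w0 : (forall w, w != w0 -> F w = 0) -> \sum_w F w = F w0.
Proof. by move=> h; rewrite (bigD1 w0) //= big1 ?addr0 // => w /andP[_]; exact: h. Qed.

Lemma Pmul_u p (y : 'M[int]_(n.+2, p)) j u :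
  (P *m y) (iu u) j = eps J u * y (iu (tf tau u)) j - (u \in J : nat)%:Z * y im1 j.
Proof.
rewrite mxE sum_idx /Phi_mat !mxE split_im1 split_i0 split_iu i1ne eqxx mul0r addr0.
rewrite (@sum_single _ (tf tau u)).
  rewrite mxE split_iu split_iu /tf permK eqxx /eps.
  by case: (u \in J) => /=; ring.
move=> w hw; rewrite mxE split_iu split_iu.
case: eqP => [e|]; last by rewrite mul0r.
by move: hw; rewrite e /tf permKV eqxx.
Qed.

Lemma Pmul_0 p (y : 'M[int]_(n.+2, p)) j :
  (P *m y) i0 j = (#|J| %/ 2)%N%:Z * y im1 j + y i0 j
                  + \sum_(u < n) ((tau^-1)%g u \in J : nat)%:Z * y (iu u) j.
Proof.
rewrite mxE sum_idx /Phi_mat !mxE split_im1 split_i0 i1ne eqxx mul1r.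
congr (_ + _); apply: eq_bigr => u _; rewrite mxE split_iu split_i0 i1ne.
by case: (_ \in J).
Qed.

Definition nu p (y : 'M[int]_(n.+2, p)) j : int := 2 * y i0 j + \sum_(u < n) y (iu u) j.

Lemma nu_P (hD : ~~ odd #|J|) p (y : 'M[int]_(n.+2, p)) j : nu (P *m y) j = nu y j.
Proof.
have e1 : \sum_(u < n) ((tau^-1)%g u \in J : nat)%:Z * y (iu u) j =
          \sum_(u < n) (u \in J : nat)%:Z * y (iu (tf tau u)) j.
  by rewrite (reindex_inj (@tf_inj n tau)); apply: eq_bigr => u _; rewrite /tf permK.
have e2 : \sum_(u < n) y (iu u) j = \sum_(u < n) y (iu (tf tau u)) j.
  by rewrite (reindex_inj (@tf_inj n tau)).
have e3 : 2 * (#|J| %/ 2)%N%:Z = \sum_(u < n) (u \in J : nat)%:Z.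
  rewrite -[in RHS](eq_bigr _ (fun u _ => natz _)) -natr_sum -natz -natrM mulnC divnK ?dvdn2 //.
  by rewrite -sum1_card big_mkcond.
have e4 : \sum_(u < n) ((u \in J : nat)%:Z * y im1 j) +
          2 * \sum_(u < n) ((u \in J : nat)%:Z * y (iu (tf tau u)) j) +
          \sum_(u < n) (eps J u * y (iu (tf tau u)) j - (u \in J : nat)%:Z * y im1 j)
          = \sum_(u < n) y (iu (tf tau u)) j.
  rewrite mulr_sumr -!big_split; apply: eq_bigr => u _; rewrite /eps.
  by case: (u \in J) => /=; ring.
rewrite /nu Pmul_0 e1 e2 (eq_bigr _ (fun u _ => Pmul_u y j u)) -e4 -mulr_suml -e3.
ring.
Qed.

Lemma Ppow (hD : ~~ odd #|J|) p (y : 'M[int]_(n.+2, p)) j a :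
  [/\ (P ^+ a *m y) im1 j = y im1 j,
      forall u, (P ^+ a *m y) (iu u) j =
                E J tau a u * y (iu (iter a (tf tau) u)) j - D J tau a u * y im1 j
    & nu (P ^+ a *m y) j = nu y j].
Proof.
elim: a => [|a [IH1 IH2 IH3]].
  rewrite expr0 mul1mx; split => // u.
  by rewrite E0 /D cnt0 /=; ring.
have -> : P ^+ a.+1 *m y = P *m (P ^+ a *m y) by rewrite mulmxA exprS.
split.
- by rewrite Pmul_m1 IH1.
- move=> u; rewrite Pmul_u IH2 IH1 ES DS iterSr; ring.
- by rewrite nu_P // IH3.
Qed.

Definition Lord := (\prod_(u : 'I_n) fingraph.order (tf tau) u)%N.

Lemma iter_mul (f : 'I_n -> 'I_n) k q u : iter k f u = u -> iter (k * q) f u = u.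
Proof.
move=> h; elim: q => [|q IH]; first by rewrite muln0.
by rewrite mulnS iterD IH h.
Qed.

Lemma iter_Lord u : iter Lord (tf tau) u = u.
Proof.
rewrite /Lord (bigD1 u) //=; apply: iter_mul; apply: iter_order; exact: tf_inj.
Qed.

Lemma ED_Lord u : E J tau (Lord + Lord) u = 1 /\ D J tau (Lord + Lord) u = 0.
Proof.
by rewrite /E /D cntD iter_Lord oddD addbb.
Qed.

Lemma Pm_id (hD : ~~ odd #|J|) p (y : 'M[int]_(n.+2, p)) : P ^+ (Lord + Lord) *m y = y.
Proof.
apply/matrixP => i j.
have [h1 h2 h3] := Ppow hD y j (Lord + Lord).
have hu : forall u, (P ^+ (Lord + Lord) *m y) (iu u) j = y (iu u) j.
  move=> u; rewrite h2; case: (ED_Lord u) => -> ->.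
  by rewrite iterD !iter_Lord mul1r mul0r subr0.
case: (idx_cases i) => [->|->|[u ->]] //.
move: h3; rewrite /nu (eq_bigr _ (fun u _ => hu u)).
move: (\sum_(i < n) _) ((P ^+ (Lord + Lord) *m y) i0 j) (y i0 j) => s a b; lia.
Qed.

Lemma P_order (hD : ~~ odd #|J|) : P ^+ (Lord + Lord) = 1.
Proof. by rewrite -[LHS]mulmx1 Pm_id. Qed.

Lemma Lord_gt0 : (0 < Lord + Lord)%N.
Proof.
rewrite /Lord; have : (0 < \prod_(u : 'I_n) fingraph.order (tf tau) u)%N.
  by rewrite prodn_gt0 // => u; exact: fingraph.order_gt0.
lia.
Qed.
End Main.

End T4.

Module T6.
Import T1 T2b T4.
Set Implicit Arguments. Unset Strict Implicit. Unset Printing Implicit Defensive.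
Import GRing.Theory Num.Theory.
Local Open Scope ring_scope.

Section Coh.
Variables (n : nat) (Q : 'M[int]_(n.+2)).

Lemma mxS a : Q *m Q ^+ a = Q ^+ a.+1. Proof. by rewrite exprS. Qed.
Lemma mxD a b : Q ^+ a *m Q ^+ b = Q ^+ (a + b). Proof. by rewrite exprD. Qed.

Lemma self_add0 (V : zmodType) (a : V) : a = a + a -> a = 0.
Proof. by move=> h; have := congr1 (fun z => z - a) h; rewrite /= subrr addrK => /esym. Qed.

Definition sQ a (x : 'cV[int]_(n.+2)) := \sum_(i < a) Q ^+ i *m x.

Lemma sQ0 x : sQ 0 x = 0. Proof. by rewrite /sQ big_ord0. Qed.

Lemma sQS a x : sQ a.+1 x = x + Q *m sQ a x.
Proof.
rewrite /sQ big_ord_recl expr0 mul1mx mulmx_sumr; congr (_ + _).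
by apply: eq_bigr => i _; rewrite mulmxA mxS.
Qed.

Lemma sQD a b x : sQ (a + b) x = sQ a x + Q ^+ a *m sQ b x.
Proof.
elim: a => [|a IH]; first by rewrite sQ0 add0r expr0 mul1mx.
by rewrite addSn !sQS IH mulmxDr addrA mulmxA mxS.
Qed.

Lemma sQ_tele a y : sQ a (Q *m y - y) = Q ^+ a *m y - y.
Proof.
elim: a => [|a IH]; first by rewrite sQ0 expr0 mul1mx subrr.
by rewrite sQS IH mulmxBr mulmxA mxS addrC addrA subrK.
Qed.

Lemma sQZ a (c : int) x : sQ a (c *: x) = c *: sQ a x.
Proof. by rewrite /sQ scaler_sumr; apply: eq_bigr => i _; rewrite scalemxAr. Qed.

Lemma sQ_add a x1 x2 : sQ a (x1 + x2) = sQ a x1 + sQ a x2.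
Proof. by rewrite /sQ -big_split; apply: eq_bigr => i _; rewrite mulmxDr. Qed.

Lemma mx2I (x1 x2 : 'cV[int]_(n.+2)) : 2 *: x1 = 2 *: x2 -> x1 = x2.
Proof.
move=> h; apply/matrixP => i j; move/matrixP: h => /(_ i j); rewrite !mxE; exact: (mulfI (_ : (2:int) != 0)).
Qed.

Lemma cocycle_val f : cocycle Q f -> forall a, f (Q ^+ a) = sQ a (f Q).
Proof.
move=> hc; have f1 : f (Q ^+ 0) = 0.
  by apply: self_add0; have := hc 0%N 0%N; rewrite expr0 mulmx1 mul1mx.
elim=> [|a IH]; first by rewrite sQ0.
by have := hc 1%N a; rewrite expr1 mxS IH sQS.
Qed.

Lemma cocycle_N f m : cocycle Q f -> Q ^+ m = 1 -> sQ m (f Q) = 0.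
Proof.
move=> hc hm; rewrite -cocycle_val // hm.
by apply: self_add0; have := hc 0%N 0%N; rewrite expr0 mulmx1 mul1mx.
Qed.

Lemma cob_iff f : cocycle Q f -> (coboundary Q f <-> exists y, f Q = Q *m y - y).
Proof.
move=> hc; split.
  by case=> y hy; exists y; have := hy 1%N; rewrite expr1.
by case=> y hy; exists y => a; rewrite cocycle_val // hy sQ_tele.
Qed.

Lemma cocycle_of m x : (0 < m)%N -> Q ^+ m = 1 -> (exists y, 2 *: x = Q *m y - y) ->
  exists2 f, cocycle Q f & f Q = x.
Proof.
move=> m0 hm [y hy].
have cons a b : Q ^+ a = Q ^+ b -> sQ a x = sQ b x.
  by move=> e; apply: mx2I; rewrite -!sQZ hy !sQ_tele e.
have red b : Q ^+ b = Q ^+ (b %% m).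
  by rewrite {1}(divn_eq b m) exprD mulnC exprM hm expr1n mul1r.
pose f (A : 'M[int]_(n.+2)) := if [pick a : 'I_m | A == Q ^+ a] is Some a then sQ a x else 0.
have fv b : f (Q ^+ b) = sQ b x.
  rewrite /f; case: pickP => [a /eqP e|].
    by apply: cons; rewrite -e.
  by move=> /(_ (Ordinal (ltn_pmod b m0))) /=; rewrite red eqxx.
exists f; last by rewrite -[Q]expr1 fv /sQ big_ord1 expr0 mul1mx.
by move=> a b; rewrite mxD !fv sQD.
Qed.

Lemma H1_of (k m : nat) (psi : 'cV[int]_(n.+2) -> 'rV['F_2]_k) :
  (0 < m)%N -> Q ^+ m = 1 ->
  (forall x1 x2, psi (x1 + x2) = psi x1 + psi x2) ->
  (forall w, exists2 x, (exists y, 2 *: x = Q *m y - y) & psi x = w) ->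
  (forall x, sQ m x = 0 -> (psi x = 0 <-> exists y, x = Q *m y - y)) ->
  H1_iso_F2pow Q k.
Proof.
move=> m0 hm hadd hsurj hker.
exists (fun f => psi (f Q)); split.
- by move=> f1 f2 _ _; rewrite hadd.
- move=> w; have [x hx <-] := hsurj w.
  by have [f hf <-] := cocycle_of m0 hm hx; exists f.
- move=> f hf; rewrite cob_iff //; apply: hker; exact: cocycle_N hf hm.
Qed.
End Coh.

End T6.

Module T7.
Import T1 T2b T4 T6.
Set Implicit Arguments. Unset Strict Implicit. Unset Printing Implicit Defensive.
Import GRing.Theory Num.Theory.
Local Open Scope ring_scope.
Section Main.
Variables (n : nat) (J : {set 'I_n}) (tau : 'S_n).
Hypothesis hD : ~~ odd #|J|.
Local Notation P := (Phi_mat J tau).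
Local Notation im1 := (im1 n).
Local Notation i0 := (i0 n).
Local Notation iu := (@iu n).
Local Notation ord u := (fingraph.order (tf tau) u).
Local Notation E := (E J tau).
Local Notation D := (D J tau).
Local Notation S := (S J tau).
Local Notation eps := (eps J).

Definition mkvec (b : int) (yy : 'I_n -> int) : 'cV[int]_(n.+2) :=
  \col_i match @split 2 n i with inl a => if a == ord0 then b else 0 | inr u => yy u end.

Lemma mkvec_m1 b yy : mkvec b yy im1 ord0 = b.
Proof. by rewrite /mkvec mxE split_im1 eqxx. Qed.
Lemma mkvec_0 b yy : mkvec b yy i0 ord0 = 0.
Proof. by rewrite /mkvec mxE split_i0 i1ne. Qed.
Lemma mkvec_u b yy u : mkvec b yy (iu u) ord0 = yy u.
Proof. by rewrite /mkvec mxE split_iu. Qed.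

Lemma entryB m p (A B : 'M[int]_(m, p)) i j : (A - B) i j = A i j - B i j.
Proof. by rewrite !mxE. Qed.

Lemma nuB p (y1 y2 : 'M[int]_(n.+2, p)) j : nu (y1 - y2) j = nu y1 j - nu y2 j.
Proof.
rewrite /nu entryB (eq_bigr (fun u => y1 (iu u) j - y2 (iu u) j)) => [|u _]; last by rewrite entryB.
by rewrite sumrB; ring.
Qed.

Lemma solveB (x : 'cV[int]_(n.+2)) (b : int) :
  x im1 ord0 = 0 -> nu x ord0 = 0 ->
  (forall u, E (ord u) u = 1 ->
     S (fun v => x (iu v) ord0 + b * (v \in J : nat)%:Z) (ord u) u = 0) ->
  (forall u, E (ord u) u = -1 ->
     (2 %| S (fun v => x (iu v) ord0 + b * (v \in J : nat)%:Z) (ord u) u)%Z) ->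
  exists y, x = P *m y - y.
Proof.
move=> hm1 hnu He Ho.
have [yy hyy] := solve_cycle He Ho.
exists (mkvec b yy).
have hu u : x (iu u) ord0 = (P *m mkvec b yy - mkvec b yy) (iu u) ord0.
  by rewrite entryB Pmul_u !mkvec_u mkvec_m1 (hyy u); ring.
apply/matrixP => i j; rewrite (ord1 j).
case: (idx_cases i) => [->|->|[u ->]] //.
  by rewrite hm1 entryB Pmul_m1 subrr.
have := nuB (P *m mkvec b yy) (mkvec b yy) ord0; rewrite nu_P // subrr.
rewrite /nu -(eq_bigr _ (fun u _ => hu u)).
move: hnu; rewrite /nu.
move: (\sum_(i < n) _) (x i0 ord0) ((P *m mkvec b yy - mkvec b yy) i0 ord0) => s a c; lia.
Qed.

Lemma sum_porbits (V : zmodType) (F : 'I_n -> V) :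
  \sum_u F u = \sum_(C in porbits tau) \sum_(v in C) F v.
Proof.
rewrite (partition_big_imset (porbit tau)) /=.
apply: eq_bigr => C /imsetP[u _ ->]; apply: eq_bigl => v.
by rewrite eq_porbit_mem.
Qed.

Lemma F2_nat m : (m%:R : 'F_2) = (odd m)%:R.
Proof.
rewrite -{1}(odd_double_half m) natrD -muln2 natrM F2_2 mulr0 addr0.
by case: (odd m).
Qed.

Lemma card_sum (C : {set 'I_n}) : #|J :&: C| = (\sum_(v in C) (v \in J))%N.
Proof.
rewrite -sum1_card [RHS](big_setID J) /= [X in (_ + X)%N]big1 ?addn0 => [|v]; last by rewrite !inE => /andP[/negPf ->].
apply: eq_big => v; first by rewrite !inE andbC.
by rewrite !inE => /andP[->].
Qed.

Lemma F2_bool_inj (b1 b2 : bool) : (b1%:R : 'F_2) = b2%:R -> b1 = b2.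
Proof.
by case: b1; case: b2 => // /eqP; rewrite /= ?mulr1n ?mulr0n ?oner_eq0 // eq_sym oner_eq0.
Qed.

Definition Oset := [set c in porbits tau | odd #|J :&: c|].

Lemma Lambda_even : ~~ odd #|Oset|.
Proof.
have h : (#|J|%:R : 'F_2) = #|Oset|%:R.
  have -> : (#|J|%:R : 'F_2) = \sum_u (u \in J : nat)%:R.
    by rewrite -natr_sum -sum1_card big_mkcond.
  rewrite sum_porbits.
  rewrite -sum1_card.
  rewrite natr_sum big_mkcond [RHS]big_mkcond.
  apply: eq_bigr => C _; rewrite inE.
  case: (C \in porbits tau); last by [].
  rewrite andTb -natr_sum -card_sum [LHS]F2_nat.
  by case: (odd #|J :&: C|).
move: h hD; rewrite [LHS]F2_nat [RHS]F2_nat => /F2_bool_inj <-; exact.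
Qed.

Definition es := enum Oset.
Definition cv (x : 'cV[int]_(n.+2)) (C : {set 'I_n}) : 'F_2 :=
  \sum_(v in C) (x (iu v) ord0)%:~R.
Definition vN x j := cv x (nth set0 es j).
Definition kk := if (#|Oset| == 0%N) || (#|Oset| == 2%N) then 0%N else (#|Oset| - 2)%N.
Definition psi x : 'rV['F_2]_kk := \row_(j < kk) (vN x j + vN x (#|Oset|.-1)).

Lemma cv_add x1 x2 C : cv (x1 + x2) C = cv x1 C + cv x2 C.
Proof. by rewrite /cv -big_split; apply: eq_bigr => v _; rewrite mxE intrD. Qed.

Lemma psi_add x1 x2 : psi (x1 + x2) = psi x1 + psi x2.
Proof. by apply/rowP => j; rewrite !mxE /vN !cv_add addrACA. Qed.

Lemma mem_es j : (j < #|Oset|)%N -> nth set0 es j \in Oset.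
Proof. by move=> h; rewrite -mem_enum; apply: mem_nth; rewrite -cardE. Qed.

Lemma Oset_porbit C : C \in Oset -> exists2 u, C = porbit tau u & odd #|J :&: C|.
Proof. by rewrite inE => /andP[/imsetP[u _ ->] ho]; exists u. Qed.

Lemma porbit_tf u v : (tf tau v \in porbit tau u) = (v \in porbit tau u).
Proof.
have e : porbit tau (tau v) = porbit tau v by have := porbit_perm tau 1 v; rewrite expg1.
by rewrite -!eq_porbit_mem /tf e.
Qed.

Lemma sum_tf (V : zmodType) (F : 'I_n -> V) u :
  \sum_(v in porbit tau u) F (tf tau v) = \sum_(v in porbit tau u) F v.
Proof.
rewrite [RHS](reindex_inj (@tf_inj n tau)) /=; apply: eq_bigl => v.
by rewrite porbit_tf.
Qed.

Lemma eps_F2 v : ((eps v)%:~R : 'F_2) = 1.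
Proof. by rewrite /eps; case: (v \in J); apply/eqP. Qed.

Lemma natz_F2 (m : nat) : ((m%:Z)%:~R : 'F_2) = m%:R.
Proof. by rewrite -natz mulrz_nat. Qed.

Lemma cv_cob y C : C \in Oset -> cv (P *m y - y) C = (y im1 ord0)%:~R.
Proof.
case/Oset_porbit => u -> ho; rewrite /cv.
have e v : ((P *m y - y) (iu v) ord0)%:~R =
   (y (iu (tf tau v)) ord0)%:~R - ((v \in J : nat)%:R * (y im1 ord0)%:~R)
   - (y (iu v) ord0)%:~R :> 'F_2.
  by rewrite entryB Pmul_u !intrB intrM eps_F2 mul1r intrM natz_F2.
rewrite (eq_bigr _ (fun v _ => e v)) !sumrB.
rewrite (sum_tf (fun w => (y (iu w) ord0)%:~R : 'F_2)) -mulr_suml -natr_sum -card_sum.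
by rewrite F2_nat ho mul1r addrAC subrr add0r F2_opp.
Qed.

Lemma kk_pos : (0 < kk)%N -> kk = (#|Oset| - 2)%N /\ (2 < #|Oset|)%N.
Proof.
rewrite /kk; case: (#|Oset|) => [|[|[|l]]] //=; lia.
Qed.

Lemma psi_cob y : psi (P *m y - y) = 0.
Proof.
apply/rowP => j; rewrite !mxE /vN.
have [e1 e2] : kk = (#|Oset| - 2)%N /\ (2 < #|Oset|)%N.
  by apply: kk_pos; case: j => j /= hj; lia.
rewrite !cv_cob ?F2_add_self // mem_es //; move: e1 e2 (ltn_ord j); move: (#|Oset|) (kk) (nat_of_ord j) => L K jj; lia.
Qed.

Lemma nu_sum a (F : 'I_a -> 'cV[int]_(n.+2)) j :
  nu (\sum_(i < a) F i) j = \sum_(i < a) nu (F i) j.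
Proof.
rewrite /nu summxE mulr_sumr (eq_bigr (fun u => \sum_(i < a) F i (iu u) j)) => [|u _]; last by rewrite summxE.
by rewrite exchange_big -big_split.
Qed.

Let mm := (Lord tau + Lord tau)%N.

Lemma sQ_m1 (x : 'cV[int]_(n.+2)) a : (sQ P a x) im1 ord0 = x im1 ord0 *+ a.
Proof.
rewrite /sQ summxE (eq_bigr (fun _ => x im1 ord0)) ?sumr_const ?card_ord // => i _.
by case: (Ppow tau hD x ord0 i).
Qed.

Lemma sQ_nu (x : 'cV[int]_(n.+2)) a : nu (sQ P a x) ord0 = nu x ord0 *+ a.
Proof.
rewrite /sQ nu_sum (eq_bigr (fun _ => nu x ord0)) ?sumr_const ?card_ord // => i _.
by case: (Ppow tau hD x ord0 i).
Qed.

Lemma sQ_u (x : 'cV[int]_(n.+2)) a u : x im1 ord0 = 0 ->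
  (sQ P a x) (iu u) ord0 = S (fun v => x (iu v) ord0) a u.
Proof.
move=> h; rewrite /sQ summxE /T2b.S; apply: eq_bigr => i _.
by case: (Ppow tau hD x ord0 i) => _ -> _; rewrite h mulr0 subr0.
Qed.

Lemma S_mul z k q u : E k u = 1 -> iter k (tf tau) u = u -> S z (k * q) u = S z k u *+ q.
Proof.
move=> hE hi; elim: q => [|q IH]; first by rewrite muln0 /T2b.S big_ord0.
by rewrite mulnS SD hE mul1r hi IH mulrS.
Qed.

Lemma ord_dvd u : exists2 q, (0 < q)%N & mm = (ord u * q)%N.
Proof.
have h0 := Lord_gt0 tau.
rewrite /mm /Lord (bigD1 u) //=.
exists ((\prod_(i | i != u) fingraph.order (tf tau) i) + (\prod_(i | i != u) fingraph.order (tf tau) i))%N.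
  by rewrite /Lord (bigD1 u) //= in h0; move: h0; rewrite -mulnDr muln_gt0 => /andP[].
by rewrite mulnDr.
Qed.

Lemma coc_props (x : 'cV[int]_(n.+2)) : sQ P mm x = 0 ->
  [/\ x im1 ord0 = 0, nu x ord0 = 0 &
      forall u, E (ord u) u = 1 -> S (fun v => x (iu v) ord0) (ord u) u = 0].
Proof.
move=> h.
have hm0 : (0 < mm)%N := Lord_gt0 tau.
have h1 : x im1 ord0 = 0.
  have := sQ_m1 x mm; rewrite h mxE => /esym /eqP; rewrite mulrn_eq0; lia.
have h2 : nu x ord0 = 0.
  have := sQ_nu x mm; rewrite h /nu mxE big1 => [|u _]; last by rewrite mxE.
  rewrite mulr0 addr0 => /esym /eqP; rewrite mulrn_eq0 /nu; lia.
split => // u hE.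
have [q q0 hq] := ord_dvd u.
have := sQ_u mm u h1; rewrite h mxE hq S_mul //; last first.
  by apply: iter_order; exact: tf_inj.
by move=> /esym /eqP; rewrite mulrn_eq0; case: (q) q0 => // q' _ /= /eqP.
Qed.

Lemma E_odd u : (E (ord u) u == -1) = odd #|J :&: porbit tau u|.
Proof. by rewrite card_JC /T2b.E /sgnb; case: odd. Qed.

Lemma E_F2 a u : ((E a u)%:~R : 'F_2) = 1.
Proof. by rewrite /T2b.E /sgnb; case: odd; apply/eqP. Qed.

Lemma S_F2 z a u : ((S z a u)%:~R : 'F_2) = \sum_(i < a) (z (iter i (tf tau) u))%:~R.
Proof.
rewrite /T2b.S; elim/big_rec2: _ => [|i a' b' _ <-]; first by rewrite mulr0z.
by rewrite intrD intrM E_F2 mul1r.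
Qed.

Lemma cv_orbit x u : cv x (porbit tau u) = (S (fun v => x (iu v) ord0) (ord u) u)%:~R.
Proof. by rewrite /cv orbit_sum S_F2. Qed.

Lemma weight (x : 'cV[int]_(n.+2)) : nu x ord0 = 0 ->
  (forall u, E (ord u) u = 1 -> S (fun v => x (iu v) ord0) (ord u) u = 0) ->
  \sum_(C in Oset) cv x C = 0.
Proof.
move=> hnu hev.
have h : \sum_(C in porbits tau) cv x C = 0.
  rewrite /cv -sum_porbits.
  have := congr1 (fun z : int => (z%:~R : 'F_2)) hnu.
  rewrite /nu intrD rmorph_sum intrM (_ : ((2 : int)%:~R : 'F_2) = 0) ?mul0r ?add0r //.
  by apply/eqP.
rewrite -[RHS]h big_mkcond [RHS]big_mkcond; apply: eq_bigr => C _; rewrite inE.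
case hC: (C \in porbits tau) => //=; case ho: odd => //.
case/imsetP: hC ho => u _ -> ho; rewrite cv_orbit hev ?mulr0z //.
move: ho; rewrite -E_odd; case: (E_cases J tau (ord u) u) => [[-> _]|[-> _]] //.
Qed.

Lemma sum_Oset_nth (F : {set 'I_n} -> 'F_2) :
  \sum_(C in Oset) F C = \sum_(0 <= j < #|Oset|) F (nth set0 es j).
Proof. by rewrite -big_enum (big_nth set0) cardE. Qed.

Lemma F2_eq (a b : 'F_2) : a + b = 0 -> a = b.
Proof. by move/eqP; rewrite addr_eq0 F2_opp => /eqP. Qed.

Lemma allEq x : psi x = 0 -> \sum_(C in Oset) cv x C = 0 ->
  forall j, (j < #|Oset|)%N -> vN x j = vN x (#|Oset|.-1).
Proof.
move=> hpsi; rewrite sum_Oset_nth -/(vN x _) => W.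
have hps j : (j < kk)%N -> vN x j + vN x (#|Oset|.-1) = 0.
  move=> hj; have := congr1 (fun r : 'rV_kk => r ord0 (Ordinal hj)) hpsi.
  by rewrite /= !mxE.
have ev := Lambda_even.
move: hps W ev; rewrite /kk.
have -> : \sum_(0 <= j < #|Oset|) vN x j = \sum_(0 <= j < #|Oset|) vN x j by [].
move: (#|Oset|) => L.
case: L => [|[|[|l]]] //= hps W ev j hj.
- have : j = 0%N \/ j = 1%N by lia.
  case=> -> //; apply: F2_eq.
  by move: W; rewrite big_nat_recr //= big_nat1.
- have hl : forall i, (i < l.+1)%N -> vN x i = vN x l.+2.
    by move=> i hi; apply: F2_eq; apply: hps; lia.
  have : (j < l.+1)%N \/ j = l.+1 \/ j = l.+2 by lia.
  case=> [/hl -> //|[->|-> //]].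
  move: W; rewrite big_nat_recr // big_nat_recr //=.
  rewrite (eq_big_nat _ _ (F2 := fun _ => vN x l.+2)) => [|i /andP[_ hi]]; last exact: hl.
  rewrite sumr_const_nat subn0 -mulr_natr F2_nat.
  rewrite (_ : odd l.+1 = false); last by move: ev => /=; case: (odd l).
  by rewrite mulr0 add0r => /F2_eq.
Qed.

Lemma S_ext z1 z2 a u : (forall v, z1 v = z2 v) -> S z1 a u = S z2 a u.
Proof. by move=> h; apply: eq_bigr => i _; rewrite h. Qed.

Lemma natF2_val (a : 'F_2) : (((val a)%:Z)%:~R : 'F_2) = a.
Proof. by rewrite natz_F2; case: (F2_cases a) => ->; apply/eqP. Qed.

Lemma porbit_Oset u : E (ord u) u = -1 -> porbit tau u \in Oset.
Proof. by move=> h; rewrite inE imset_f //= -E_odd h eqxx. Qed.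

Lemma ker_dir (x : 'cV[int]_(n.+2)) : sQ P mm x = 0 -> psi x = 0 -> exists y, x = P *m y - y.
Proof.
move=> hs hpsi.
have [h1 h2 hev] := coc_props hs.
have AE := allEq hpsi (weight h2 hev).
set a0 := vN x (#|Oset|.-1) in AE.
have cvC C : C \in Oset -> cv x C = a0.
  move=> hC; have hm : C \in es by rewrite mem_enum.
  have hi : (index C es < #|Oset|)%N by rewrite cardE index_mem.
  by rewrite -(AE _ hi) /vN nth_index.
apply: (@solveB x ((val a0)%:Z) h1 h2).
  move=> u hE.
  rewrite (SDz J tau (fun v => x (iu v) ord0) (fun v => (val a0)%:Z * (v \in J : nat)%:Z)).
  rewrite (SMz J tau (val a0)%:Z (fun v => (v \in J : nat)%:Z)) Sind hev //.
  by case: (E_cases J tau (ord u) u) => [[_ ->]|[h _]]; [rewrite mulr0 addr0 | move: h; rewrite hE].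
move=> u hE; rewrite -F2_intr_dvd; apply/eqP.
rewrite S_F2 -(orbit_sum tau (fun v => ((x (iu v) ord0 + (val a0)%:Z * (v \in J : nat)%:Z)%:~R : 'F_2)) u).
rewrite (eq_bigr (fun v => (x (iu v) ord0)%:~R + a0 * (v \in J : nat)%:R)) => [|v _]; last first.
  by rewrite intrD intrM natF2_val natz_F2.
rewrite big_split /= -mulr_sumr -natr_sum -card_sum F2_nat.
have hO := porbit_Oset hE.
move: (hO); rewrite inE => /andP[_ ->]; rewrite mulr1.
by rewrite -/(cv x (porbit tau u)) cvC // F2_add_self.
Qed.

Definition eC (r : 'I_n) : 'cV[int]_(n.+2) := delta_mx (iu r) ord0.
Definition e0 : 'cV[int]_(n.+2) := delta_mx i0 ord0.

Lemma ne_m1_u r : (im1 == iu r) = false. Proof. by rewrite -val_eqE. Qed.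
Lemma ne_0_u r : (i0 == iu r) = false. Proof. by rewrite -val_eqE. Qed.
Lemma ne_u_0 r : (iu r == i0) = false. Proof. by rewrite -val_eqE. Qed.
Lemma ne_m1_0 : (im1 == i0) = false. Proof. by rewrite -val_eqE. Qed.

Lemma IM2 r : porbit tau r \in Oset -> exists y, 2 *: eC r - e0 = P *m y - y.
Proof.
move=> hr.
set x := 2 *: eC r - e0.
have xm1 : x im1 ord0 = 0 by rewrite !mxE ne_m1_u ne_m1_0 /= mulr0 subr0.
have x0 : x i0 ord0 = -1 by rewrite !mxE ne_0_u eqxx /= mulr0 add0r.
have xu u : x (iu u) ord0 = 2 * (u == r : nat)%:Z.
  by rewrite !mxE ne_u_0 (inj_eq (@iu_inj n)) /= subr0; case: (u == r).
have hnu : nu x ord0 = 0.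
  rewrite /nu x0 (eq_bigr _ (fun u _ => xu u)) (@sum_single n _ r) ?eqxx //.
  by move=> w /negPf ->; rewrite mulr0.
apply: (solveB (b := 0) xm1 hnu).
  move=> u hE; apply: big1 => i _.
  rewrite xu mul0r addr0.
  case: eqP => [e|]; last by rewrite mulr0.
  have : r \in porbit tau u by rewrite -e -permX mem_porbit.
  rewrite -eq_porbit_mem => /eqP e'.
  by move: hr hE; rewrite e' inE => /andP[_]; rewrite -E_odd => /eqP ->.
move=> u _; rewrite -F2_intr_dvd; apply/eqP.
rewrite S_F2 big1 // => i _.
by rewrite xu mul0r addr0 intrM (_ : ((2:int)%:~R : 'F_2) = 0) ?mul0r //; apply/eqP.
Qed.

Definition eCC (C : {set 'I_n}) : 'cV[int]_(n.+2) :=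
  if [pick v in C] is Some r then eC r else 0.

Lemma eCC_spec C : C \in Oset -> exists2 r, eCC C = eC r & C = porbit tau r.
Proof.
case/Oset_porbit => u -> _; rewrite /eCC; case: pickP => [r hr|h].
  exists r => //; apply/eqP; rewrite eq_sym eq_porbit_mem //.
by have := h u; rewrite porbit_id.
Qed.

Lemma cv_eC r C : cv (eC r) C = (r \in C : nat)%:R.
Proof.
rewrite /cv (eq_bigr (fun v => (v == r : nat)%:R)) => [|v _]; last first.
  by rewrite mxE (inj_eq (@iu_inj n)) eqxx andbT; case: (v == r).
case hr: (r \in C).
  rewrite (bigD1 r) //= eqxx big1 ?addr0 // => v /andP[_ /negPf ->] //.
by rewrite big1 // => v hv; case: eqP => // e; move: hr; rewrite -e hv.
Qed.

Lemma cv_eCC C C' : C \in Oset -> C' \in Oset -> cv (eCC C) C' = (C == C' : nat)%:R.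
Proof.
move=> hC /Oset_porbit [u -> _]; have [r -> ->] := eCC_spec hC.
by rewrite cv_eC eq_porbit_mem.
Qed.

Lemma cvB x1 x2 C : cv (x1 - x2) C = cv x1 C - cv x2 C.
Proof. by rewrite /cv -sumrB; apply: eq_bigr => v _; rewrite entryB intrB. Qed.

Lemma zmod4 (V : zmodType) (a b c d : V) : (a - b) - (c - d) = (a - c) - (b - d).
Proof. by rewrite !opprB addrACA [RHS]addrACA (addrC (- c)). Qed.

Definition IMs (x : 'cV[int]_(n.+2)) := exists y, 2 *: x = P *m y - y.

Lemma IMs0 : IMs 0. Proof. by exists 0; rewrite scaler0 mulmx0 subr0. Qed.
Lemma IMsD x1 x2 : IMs x1 -> IMs x2 -> IMs (x1 + x2).
Proof.
move=> [y1 h1] [y2 h2]; exists (y1 + y2).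
by rewrite scalerDr h1 h2 mulmxDr opprD addrACA.
Qed.
Lemma IM2C C : C \in Oset -> exists y, 2 *: eCC C - e0 = P *m y - y.
Proof. by move=> hC; have [r e1 e2] := eCC_spec hC; rewrite e1; apply: IM2; rewrite -e2. Qed.

Lemma IMs_diff C C' : C \in Oset -> C' \in Oset -> IMs (eCC C - eCC C').
Proof.
move=> /IM2C [y1 h1] /IM2C [y2 h2]; exists (y1 - y2).
have -> : 2 *: (eCC C - eCC C') = (2 *: eCC C - e0) - (2 *: eCC C' - e0).
  by rewrite scalerBr opprB addrA subrK.
by rewrite h1 h2 mulmxBr zmod4.
Qed.

Lemma psi0 : psi 0 = 0.
Proof. by apply: self_add0; rewrite -psi_add addr0. Qed.

Lemma nth_es_eq a b : (a < #|Oset|)%N -> (b < #|Oset|)%N ->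
  (nth set0 es a == nth set0 es b) = (a == b).
Proof. by move=> ha hb; rewrite nth_uniq // ?enum_uniq // -cardE. Qed.

Lemma psi_bv (i : 'I_kk) :
  psi (eCC (nth set0 es i) - eCC (nth set0 es (#|Oset| - 2)%N)) = delta_mx ord0 i.
Proof.
have [e1 e2] : kk = (#|Oset| - 2)%N /\ (2 < #|Oset|)%N.
  by apply: kk_pos; case: i => i /= hi; lia.
have hi := ltn_ord i.
apply/rowP => l; have hl := ltn_ord l.
rewrite !mxE /vN !cvB.
rewrite !cv_eCC ?mem_es; try lia.
rewrite !nth_es_eq; try lia.
have -> : (#|Oset| - 2 == l)%N = false by apply/negP => /eqP; lia.
have -> : (i == #|Oset|.-1 :> nat) = false by apply/negP => /eqP; lia.
have -> : (#|Oset| - 2 == #|Oset|.-1)%N = false by apply/negP => /eqP; lia.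
rewrite eqxx /= subr0 subrr addr0 eq_sym.
first [done | by rewrite [RHS]val_eqE | by rewrite -val_eqE | by rewrite [in RHS]val_eqE].
Qed.

Lemma surj w : exists2 x, IMs x & psi x = w.
Proof.
exists (\sum_(i < kk | w ord0 i != 0) (eCC (nth set0 es i) - eCC (nth set0 es (#|Oset| - 2)%N))).
  apply: big_ind => //; [exact: IMs0 | exact: IMsD |] => i _.
  have [e1 e2] : kk = (#|Oset| - 2)%N /\ (2 < #|Oset|)%N.
    by apply: kk_pos; case: i => i /= hi; lia.
  have hi := ltn_ord i.
  by apply: IMs_diff; apply: mem_es; lia.
rewrite (big_morph psi psi_add psi0) (eq_bigr _ (fun i _ => psi_bv i)).
apply/rowP => l; rewrite summxE.
rewrite (eq_bigr (fun i => (i == l : nat)%:R)) => [|i _]; last first.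
  by rewrite mxE eqxx /= eq_sym.
rewrite big_mkcond (bigD1 l) //= eqxx big1 ?addr0 => [|i /negPf ->]; last by case: (_ != 0).
by case: (F2_cases (w ord0 l)) => ->; rewrite ?eqxx //; apply/eqP.
Qed.
End Main.

End T7.

Import T1 T2b T4 T6 T7.

Theorem proposition4p1 (n : nat) (J : {set 'I_n}) (tau : 'S_n)
  (hD : ~~ odd #|J|) :
  H1_iso_F2pow (Phi_mat J tau)
    (if (Lambda J tau == 0%N) || (Lambda J tau == 2%N) then 0%N
     else (Lambda J tau - 2)%N).
Proof.
apply: (@H1_of _ _ (kk J tau) (Lord tau + Lord tau) (@psi n J tau)).
- exact: Lord_gt0.
- exact: P_order.
- exact: psi_add.
- exact: surj.
- move=> x hx; split; first by move=> hp; exact: (ker_dir hD hx hp).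
  by case=> y ->; apply: psi_cob.
Qed.
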